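(* Let $Q$ be a symmetric Leibniz algebra and $L$ a semiprime subalgebra of $Q$ such that $Q$ is an algebra of quotients of $L$. Then $\mathscr{A}(Q)$ is a left quotient algebra of $\mathscr{A}_0$.
   Context: A symmetric Leibniz algebra is one satisfying both $[x,[y,z]]=[[x,y],z]-[[x,z],y]$ and $[x,[y,z]]=[[x,y],z]+[y,[x,z]]$. Ideals of $L$ are subspaces $I$ with $[I,L]\subseteq I$, $[L,I]\subseteq I$; $L$ is semiprime if $[I,I]\ne\{0\}$ for every nonzero ideal $I$. For $x\in Q$, $R_x(u)=[u,x]$, $L_x(u)=[x,u]$. $\mathscr{A}(Q)$ is the associative subalgebra of $\mathrm{End}(Q)$ generated by $\{R_x,L_y:x,y\in Q\}$, and $\mathscr{A}_0=\{\mu\in\mathscr{A}(Q):\mu(L)\subseteq L\}$. For $q\in Q$, with $\mathscr{A}_Q(L)$ the subalgebra of $\mathscr{A}(Q)$ generated by $R_x,L_y$ ($x,y\in L$), set ${}_L(q)=\mathbb{F}q+\{\sum\xi_i(q):\xi_i\in\mathscr{A}_Q(L)\}$ and $(L:q)=\{x\in L:[x,{}_L(q)]\subseteq L,[{}_L(q),x]\subseteq L\}$. $Q$ is an algebra of quotients of $L$ if for all $p,q\in Q$ with $p\ne0$ there is $x\in(L:q)$ with $[x,p]\ne0$ or $y\in(L:q)$ with $[p,y]\ne0$. An associative algebra $S$ is a left quotient algebra of a subalgebra $A$ if for all $p,q\in S$ with $p\neq 0$ there exists $x\in A$ with $xp\neq0$ and $xq\in A$. *)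

(* Defs.v *)
From mathcomp Require Import all_boot all_algebra.
Set Implicit Arguments. Unset Strict Implicit. Unset Printing Implicit Defensive.
Import GRing.Theory.
Local Open Scope ring_scope.

Section LeibnizDefs.
Variables (F : fieldType) (Q : lmodType F) (br : Q -> Q -> Q).

Definition bilinear_br : Prop :=
  (forall (a : F) x y z, br (a *: x + y) z = a *: br x z + br y z) /\
  (forall (a : F) x y z, br x (a *: y + z) = a *: br x y + br x z).

Definition symmetric_Leibniz : Prop :=
  bilinear_br /\
  (forall x y z, br x (br y z) = br (br x y) z - br (br x z) y) /\
  (forall x y z, br x (br y z) = br (br x y) z + br y (br x z)).

Definition Rop (x : Q) : Q -> Q := fun u => br u x.
Definition Lop (x : Q) : Q -> Q := fun u => br x u.

Inductive gen_alg (S : Q -> Prop) : (Q -> Q) -> Prop :=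
| ga_R x : S x -> gen_alg S (Rop x)
| ga_L x : S x -> gen_alg S (Lop x)
| ga_0 : gen_alg S (fun _ => 0)
| ga_add f g : gen_alg S f -> gen_alg S g -> gen_alg S (fun u => f u + g u)
| ga_scale (a : F) f : gen_alg S f -> gen_alg S (fun u => a *: f u)
| ga_comp f g : gen_alg S f -> gen_alg S g -> gen_alg S (fun u => f (g u)).

Definition AQ : (Q -> Q) -> Prop := gen_alg (fun _ => True).

Definition A0 (L : Q -> Prop) (mu : Q -> Q) : Prop :=
  AQ mu /\ (forall x, L x -> L (mu x)).

Definition subspace (S : Q -> Prop) : Prop :=
  S 0 /\ (forall (a : F) x y, S x -> S y -> S (a *: x + y)).

Definition subalgebra (L : Q -> Prop) : Prop :=
  subspace L /\ (forall x y, L x -> L y -> L (br x y)).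

Definition ideal (L I : Q -> Prop) : Prop :=
  subspace I /\ (forall x, I x -> L x) /\
  (forall x y, I x -> L y -> I (br x y) /\ I (br y x)).

Definition semiprime (L : Q -> Prop) : Prop :=
  forall I, ideal L I -> (exists x, I x /\ x <> 0) ->
    exists a b, I a /\ I b /\ br a b <> 0.

Definition Lhull (L : Q -> Prop) (q u : Q) : Prop :=
  exists (a : F) (s : seq (Q -> Q)),
    (forall i, (i < size s)%N -> gen_alg L (nth (fun _ => 0) s i)) /\
    u = a *: q + \sum_(f <- s) f q.

Definition colon (L : Q -> Prop) (q x : Q) : Prop :=
  L x /\ (forall u, Lhull L q u -> L (br x u) /\ L (br u x)).

Definition quotient_alg (L : Q -> Prop) : Prop :=
  forall p q : Q, p <> 0 ->
    (exists x, colon L q x /\ br x p <> 0) \/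
    (exists y, colon L q y /\ br p y <> 0).

End LeibnizDefs.

Definition left_quotient_alg (T : zmodType) (S A : (T -> T) -> Prop) : Prop :=
  forall p q, S p -> S q -> p <> (fun _ => 0) ->
    exists x, A x /\ (fun u => x (p u)) <> (fun _ => 0) /\ A (fun u => x (q u)).

(* Main.v *)
Require Import Defs.
From mathcomp Require Import all_boot all_algebra.
From Stdlib Require Import Classical FunctionalExtensionality.
Set Implicit Arguments. Unset Strict Implicit. Unset Printing Implicit Defensive.
Import GRing.Theory.
Local Open Scope ring_scope.

Section Main.
Variables (F : fieldType) (Q : lmodType F) (br : Q -> Q -> Q) (L : Q -> Prop).
Hypothesis Hb1 : forall (a : F) x y z, br (a *: x + y) z = a *: br x z + br y z.
Hypothesis Hb2 : forall (a : F) x y z, br x (a *: y + z) = a *: br x y + br x z.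
Hypothesis HR : forall x y z, br x (br y z) = br (br x y) z - br (br x z) y.
Hypothesis HJ : forall x y z, br x (br y z) = br (br x y) z + br y (br x z).
Hypothesis HL0 : L 0.
Hypothesis HLlin : forall (a : F) x y, L x -> L y -> L (a *: x + y).
Hypothesis HLbr : forall x y, L x -> L y -> L (br x y).
Hypothesis Hsp : semiprime br L.
Hypothesis Hq : quotient_alg br L.

Lemma br0l z : br 0 z = 0.
Proof.
have := Hb1 1 0 0 z; rewrite scale1r addr0 scale1r => H.
by apply: (addrI (br 0 z)); rewrite addr0 -H.
Qed.
Lemma br0r z : br z 0 = 0.
Proof.
have := Hb2 1 z 0 0; rewrite scale1r addr0 scale1r => H.
by apply: (addrI (br z 0)); rewrite addr0 -H.
Qed.
Lemma brDl x y z : br (x + y) z = br x z + br y z.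
Proof. by have := Hb1 1 x y z; rewrite !scale1r. Qed.
Lemma brDr x y z : br z (x + y) = br z x + br z y.
Proof. by have := Hb2 1 z x y; rewrite !scale1r. Qed.
Lemma brZl a x z : br (a *: x) z = a *: br x z.
Proof. by have := Hb1 a x 0 z; rewrite !addr0 br0l addr0. Qed.
Lemma brZr a x z : br z (a *: x) = a *: br z x.
Proof. by have := Hb2 a z x 0; rewrite !addr0 br0r addr0. Qed.
Lemma brNl x z : br (- x) z = - br x z.
Proof. by rewrite -scaleN1r brZl scaleN1r. Qed.
Lemma brNr x z : br z (- x) = - br z x.
Proof. by rewrite -scaleN1r brZr scaleN1r. Qed.
Lemma brBl x y z : br (x - y) z = br x z - br y z.
Proof. by rewrite brDl brNl. Qed.
Lemma brBr x y z : br z (x - y) = br z x - br z y.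
Proof. by rewrite brDr brNr. Qed.

Lemma colon_L q x : colon br L q x -> L x.
Proof. by case. Qed.

Lemma brxx x : br x x = 0.
Proof.
apply: NNPP => Hne.
have Hc1 : forall z, br z (br x x) = 0.
  by move=> z; rewrite HR subrr.
have Hc2 : forall z, br (br x x) z = 0.
  move=> z; have := HJ x x z => H.
  by apply: (addIr (br x (br x z))); rewrite add0r -H.
case: (@Hq (br x x) 0 Hne) => [[y [_ Hy]]|[y [_ Hy]]]; by [rewrite Hc1 in Hy | rewrite Hc2 in Hy].
Qed.

Lemma anti x y : br x y = - br y x.
Proof.
have := brxx (x + y); rewrite brDl !brDr !brxx add0r addr0 => H.
by apply/eqP; rewrite -addr_eq0 H.
Qed.

Lemma Jac2 x l w : br (br x l) w = br x (br l w) - br l (br x w).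
Proof. by rewrite HJ addrK. Qed.

Lemma HLD x y : L x -> L y -> L (x + y).
Proof. by move=> ??; rewrite -[x]scale1r; apply: HLlin. Qed.
Lemma HLZ a x : L x -> L (a *: x).
Proof. by move=> ?; rewrite -[_ *: _]addr0; apply: HLlin. Qed.
Lemma HLN x : L x -> L (- x).
Proof. by move=> ?; rewrite -scaleN1r; apply: HLZ. Qed.


Definition idl (I : Q -> Prop) :=
  [/\ I 0, (forall a x y, I x -> I y -> I (a *: x + y)),
      (forall x, I x -> L x) & (forall x l, I x -> L l -> I (br x l))].
Definition dense (I : Q -> Prop) :=
  forall p, p <> 0 -> exists a, I a /\ br a p <> 0.

Section IdlFacts.
Variable I : Q -> Prop.
Hypothesis HI : idl I.
Lemma idl0 : I 0. Proof. by case: HI. Qed.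
Lemma idlL x : I x -> L x. Proof. by case: HI => _ _ H _; apply: H. Qed.
Lemma idlD x y : I x -> I y -> I (x + y).
Proof. by case: HI => _ H _ _ ??; rewrite -[x]scale1r; apply: H. Qed.
Lemma idlZ a x : I x -> I (a *: x).
Proof. by case: HI => H0 H _ _ ?; rewrite -[_ *: _]addr0; apply: H. Qed.
Lemma idlN x : I x -> I (- x).
Proof. by move=> ?; rewrite -scaleN1r; apply: idlZ. Qed.
Lemma idlB x y : I x -> I y -> I (x - y).
Proof. by move=> ??; apply: idlD => //; apply: idlN. Qed.
Lemma idlbr x l : I x -> L l -> I (br x l).
Proof. by case: HI => _ _ _ H; apply: H. Qed.
Lemma idlbrl x l : I x -> L l -> I (br l x).
Proof. by move=> ??; rewrite anti; apply: idlN; apply: idlbr. Qed.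
Lemma idl_ideal : ideal br L I.
Proof.
split; first by split; [apply: idl0 | case: HI].
split; first by apply: idlL.
by move=> x y Hx Hy; split; [apply: idlbr | apply: idlbrl].
Qed.
End IdlFacts.

Lemma idlLL : idl L.
Proof. by split => // x l ??; apply: HLbr. Qed.

Lemma semiprime_zero K : idl K -> (forall a b, K a -> K b -> br a b = 0) ->
  forall v, K v -> v = 0.
Proof.
move=> HK Hab v Kv; apply: NNPP => Hv.
have [a [b [Ka [Kb Hne]]]] := Hsp (idl_ideal HK) (ex_intro _ v (conj Kv Hv)).
by apply: Hne; apply: Hab.
Qed.

Lemma idlI I J : idl I -> idl J -> idl (fun x => I x /\ J x).
Proof.
move=> HI HJ'; split.
- by split; apply: idl0.
- by move=> a x y [??] [??]; split; [case: HI => _ H _ _; apply: H | case: HJ' => _ H _ _; apply: H].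
- by move=> x [? _]; apply: (idlL HI).
- by move=> x l [??] ?; split; apply: idlbr.
Qed.

Lemma kill K : idl K -> forall f, gen_alg br L f ->
  forall w, (forall k, K k -> br k w = 0) -> forall k, K k -> br k (f w) = 0.
Proof.
move=> HK f; elim => {f}.
- move=> x Lx w Hw k Kk; rewrite /Rop [br w x]anti brNr HJ (Hw k Kk) br0r addr0.
  by rewrite (Hw _ (idlbr HK Kk Lx)) oppr0.
- move=> x Lx w Hw k Kk; rewrite /Lop HJ (Hw k Kk) br0r addr0.
  by rewrite (Hw _ (idlbr HK Kk Lx)).
- by move=> w _ k _; rewrite br0r.
- by move=> f g _ IHf _ IHg w Hw k Kk; rewrite brDr IHf // IHg // addr0.
- by move=> a f _ IHf w Hw k Kk; rewrite brZr IHf // scaler0.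
- by move=> f g _ IHf _ IHg w Hw k Kk; apply: IHf => // k' Kk'; apply: IHg.
Qed.

Definition Dset (I : Q -> Prop) (y x : Q) : Prop :=
  L x /\ I (br x y) /\ forall f, gen_alg br L f -> I (br x (f y)).

Lemma Ddense y : dense (Dset L y).
Proof.
move=> p Hp.
have Hc : forall c, colon br L y c -> Dset L y c.
  move=> c [Lc Hc]; split => //; split.
    have := Hc y; case; last by [].
    by exists 1, [::]; rewrite scale1r big_nil addr0.
  move=> f Hf; have := Hc (f y); case; last by [].
  exists 0, [:: f]; split; last by rewrite scale0r add0r big_cons big_nil addr0.
  by case=> //=.
case: (@Hq p y Hp) => [[x [Cx Hx]]|[x [Cx Hx]]]; exists x; split; try by apply: Hc.
by []. by rewrite anti => /eqP; rewrite oppr_eq0 => /eqP.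
Qed.

Lemma denseL : dense L.
Proof. by move=> p Hp; have [a [[La _] Ha]] := Ddense 0 Hp; exists a. Qed.

Lemma Dset_idl I y : idl I -> idl (Dset I y).
Proof.
move=> HI; split.
- split => //; rewrite br0l; split; first by apply: idl0.
  by move=> f _; rewrite br0l; apply: idl0.
- move=> a x z [Lx [Ix Hx]] [Lz [Iz Hz]]; split; first by apply: HLlin.
  rewrite Hb1; split; first by case: HI => _ H _ _; apply: H.
  by move=> f Hf; rewrite Hb1; case: HI => _ H _ _; apply: H; [apply: Hx|apply: Hz].
- by move=> x [].
- move=> x l [Lx [Ix Hx]] Ll; split; first by apply: HLbr.
  split.
    rewrite Jac2; apply: idlB => //; last by apply: idlbrl.
    by have := Hx (Lop br l) (ga_L br Ll).
  move=> f Hf; rewrite Jac2; apply: idlB => //; last by apply: idlbrl => //; apply: Hx.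
  by have := Hx (fun u => Lop br l (f u)) (ga_comp (ga_L br Ll) Hf).
Qed.

Lemma D_prod I y i c : idl I -> I i -> Dset L y i -> I c -> Dset L y c ->
  Dset I y (br i c).
Proof.
move=> HI Ii [Li [Liy Hi]] Ic [Lc [Lcy Hc]].
have key : forall w, L (br i w) -> L (br c w) -> I (br (br i c) w).
  move=> w H1 H2; rewrite Jac2; apply: idlB => //; first by apply: idlbr.
  by apply: idlbr.
split; first by apply: HLbr => //; apply: (idlL HI).
by split; [apply: key | move=> f Hf; apply: key; [apply: Hi|apply: Hc]].
Qed.


Lemma gen_dense I J K : idl I -> dense I -> idl J -> dense J -> idl K ->
  (forall i j, I i -> J j -> K (br i j)) -> dense K.
Proof.
move=> HI dI HJ' dJ HK HIJ p Hp.
apply: NNPP => Hn.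
have Hk : forall k, K k -> br k p = 0.
  by move=> k Kk; apply: NNPP => H; apply: Hn; exists k.
have [a [Ia Ha]] := dI p Hp.
have Hkm : forall k, K k -> br k (br a p) = 0.
  exact: (kill HK (ga_L br (idlL HI Ia)) Hk).
have [c [[Lc [_ Hc]] Hcm]] := Ddense p Ha.
have Le : L (br c (br a p)) := Hc _ (ga_L br (idlL HI Ia)).
pose U x := L x /\ forall k, K k -> br x k = 0.
have HU : idl U.
  split.
  - by split => // k _; rewrite br0l.
  - move=> b x y [Lx Hx] [Ly Hy]; split; first by apply: HLlin.
    by move=> k Kk; rewrite Hb1 Hx // Hy // scaler0 addr0.
  - by move=> x [].
  - move=> u l [Lu Hu] Ll; split; first by apply: HLbr.
    move=> k Kk; rewrite anti HJ [br k u]anti Hu // oppr0 br0l add0r Hu ?oppr0 //.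
    by apply: idlbr.
have Ue : U (br c (br a p)).
  split => // k Kk; rewrite anti HJ (Hkm _ (idlbr HK Kk Lc)) add0r (Hkm _ Kk).
  by rewrite br0r oppr0.
have [a' [Ia' Ha']] := dI _ Hcm.
apply: Ha'.
have Ix : I (br a' (br c (br a p))) := idlbr HI Ia' Le.
have Ux : U (br a' (br c (br a p))) := idlbrl HU Ue (idlL HI Ia').
apply: NNPP => Hx.
have [j [Jj Hj]] := dJ _ Hx.
apply: Hj.
have Hz : br (br a' (br c (br a p))) j = 0.
  apply: (semiprime_zero (idlI HK HU)); last first.
    by split; [apply: HIJ | apply: idlbr => //; apply: (idlL HJ')].
  by move=> u v [Ku Uu] [Kv Uv]; case: Uu => _ H; apply: H.
by rewrite anti Hz oppr0.
Qed.

Fixpoint Phi (I : Q -> Prop) (n : nat) (v : Q) : Prop :=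
  if n is n'.+1 then forall a, I a -> Phi I n' (br a v) else L v.

Lemma Phi_lin I n a v w : Phi I n v -> Phi I n w -> Phi I n (a *: v + w).
Proof.
elim: n v w => [|n IH] v w; first exact: HLlin.
move=> Hv Hw b Ib; rewrite Hb2; apply: IH; [apply: Hv | apply: Hw] => //.
Qed.
Lemma Phi0 I n : Phi I n 0.
Proof. by elim: n => [|n IH] //= a _; rewrite br0r. Qed.
Lemma PhiD I n v w : Phi I n v -> Phi I n w -> Phi I n (v + w).
Proof. by move=> ??; rewrite -[v]scale1r; apply: Phi_lin. Qed.
Lemma PhiZ I n a v : Phi I n v -> Phi I n (a *: v).
Proof. by move=> ?; rewrite -[_ *: _]addr0; apply: Phi_lin => //; apply: Phi0. Qed.
Lemma PhiL I n v : (forall x, I x -> L x) -> L v -> Phi I n v.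
Proof.
move=> HIL; elim: n v => //= n IH v Lv a Ia; apply: IH; apply: HLbr => //; exact: HIL.
Qed.
Lemma Phi_mono I J n v : (forall x, J x -> I x) -> Phi I n v -> Phi J n v.
Proof.
move=> H; elim: n v => //= n IH v Hv a Ja; apply: IH; apply: Hv; exact: H.
Qed.
Lemma Phi_ext I n m v : (forall x, I x -> L x) -> (n <= m)%N -> Phi I n v -> Phi I m v.
Proof.
move=> HIL; elim: n m v => [|n IH] m v Hnm; first by move=> Lv; apply: PhiL.
case: m Hnm => // m Hnm Hv a Ia; apply: IH => //; exact: Hv.
Qed.

Definition Good (f : Q -> Q) :=
  exists I n, idl I /\ dense I /\ forall l, L l -> Phi I n (f l).

Lemma Good_cons y f : Good f -> Good (fun u => br y (f u)).
Proof.
move=> [I [n [HI [dI Hf]]]].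
pose K0 x := I x /\ Dset L y x.
have HDL : idl (Dset L y) := Dset_idl y idlLL.
have HK0 : idl K0 := idlI HI HDL.
have dK0 : dense K0.
  apply: (gen_dense HI dI HDL (Ddense y) HK0) => i j Ii Dj; split.
    by apply: (idlbr HI Ii); case: Dj.
  by apply: (idlbrl HDL Dj (idlL HI Ii)).
have HD2 : idl (Dset I y) := Dset_idl y HI.
have dD2 : dense (Dset I y).
  apply: (gen_dense HK0 dK0 HK0 dK0 HD2) => i c [Ii Di] [Ic Dc].
  exact: D_prod.
pose J x := I x /\ Dset I y x.
have HJ0 : idl J := idlI HI HD2.
have dJ : dense J.
  apply: (gen_dense HI dI HD2 dD2 HJ0) => i j Ii Dj; split.
    exact: (idlbr HI Ii (idlL HD2 Dj)).
  exact: (idlbrl HD2 Dj (idlL HI Ii)).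
have JI : forall x, J x -> I x by move=> x [].
have JD : forall x, J x -> Dset L y x.
  move=> x [Ix [Lx [Ixy Hx]]]; split => //; split; first exact: (idlL HI).
  by move=> g Hg; apply: (idlL HI); auto.
have JIy : forall b, J b -> I (br b y) by move=> b [_ [_ [H _]]].
have claim : forall n v, Phi I n v -> Phi J n.+1 (br y v).
  elim => [|n' IH] v.
  - move=> Lv b Jb; rewrite HJ; apply: HLD.
      by apply: HLbr => //; case: (JD b Jb) => _ [].
    have Db : Dset L y (br b v) := idlbr HDL (JD b Jb) Lv.
    by rewrite anti; apply: HLN; case: Db => _ [].
  - move=> Hv b Jb; change (Phi J n'.+1 (br b (br y v))); rewrite HJ; apply: PhiD.
      apply: (Phi_ext (idlL HJ0) (leqnSn n')).
      by apply: (Phi_mono JI); apply: Hv; apply: JIy.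
    by apply: IH; apply: Hv; apply: JI.
exists J, n.+1; split => //; split => // l Ll; apply: claim; exact: Hf.
Qed.

Lemma Good_id : Good (fun u => u).
Proof. by exists L, 0%N; split; [exact: idlLL | split; [exact: denseL | ]]. Qed.
Lemma Good_0 : Good (fun _ => 0).
Proof. by exists L, 0%N; split; [exact: idlLL | split; [exact: denseL | ]]. Qed.
Lemma Good_add f g : Good f -> Good g -> Good (fun u => f u + g u).
Proof.
move=> [I1 [n1 [HI1 [dI1 H1]]]] [I2 [n2 [HI2 [dI2 H2]]]].
have HK := idlI HI1 HI2.
exists (fun x => I1 x /\ I2 x), (n1 + n2)%N; split => //; split.
  apply: (gen_dense HI1 dI1 HI2 dI2 HK) => i j Ii Ij; split.
    exact: (idlbr HI1 Ii (idlL HI2 Ij)).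
  exact: (idlbrl HI2 Ij (idlL HI1 Ii)).
move=> l Ll; apply: PhiD; apply: (Phi_ext (idlL HK)).
- exact: leq_addr.
- by apply: (Phi_mono (I := I1)); [move=> x [] | apply: H1].
- exact: leq_addl.
- by apply: (Phi_mono (I := I2)); [move=> x [] | apply: H2].
Qed.
Lemma Good_scale a f : Good f -> Good (fun u => a *: f u).
Proof.
move=> [I [n [HI [dI H]]]]; exists I, n; split => //; split => // l Ll.
by apply: PhiZ; apply: H.
Qed.
Lemma Good_ext f g : Good f -> (forall u, f u = g u) -> Good g.
Proof.
move=> [I [n [HI [dI H]]]] E; exists I, n; split => //; split => // l Ll.
by rewrite -E; apply: H.
Qed.

Inductive LW : (Q -> Q) -> Prop :=
| lw_base y : LW (fun u => br y u)
| lw_cons y f : LW f -> LW (fun u => br y (f u))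
| lw_0 : LW (fun _ => 0)
| lw_add f g : LW f -> LW g -> LW (fun u => f u + g u)
| lw_scale (a : F) f : LW f -> LW (fun u => a *: f u)
| lw_ext f g : LW f -> (forall u, f u = g u) -> LW g.

Lemma LW_comp f g : LW f -> LW g -> LW (fun u => f (g u)).
Proof.
move=> Hf Hg; elim: Hf => {f}.
- by move=> y; apply: lw_cons.
- by move=> y f _ IH; apply: (lw_cons y IH).
- exact: lw_0.
- by move=> f f' _ IH _ IH'; apply: (lw_add IH IH').
- by move=> a f _ IH; apply: (lw_scale a IH).
- by move=> f f' _ IH E; apply: (lw_ext IH) => u; rewrite E.
Qed.

Lemma AQ_LW f : AQ br f -> LW f.
Proof.
elim => {f}.
- move=> x _; apply: (lw_ext (lw_scale (-1) (lw_base x))) => u.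
  by rewrite scaleN1r /Rop [br u x]anti.
- by move=> x _; apply: lw_base.
- exact: lw_0.
- by move=> f g _ IH _ IH'; apply: (lw_add IH IH').
- by move=> a f _ IH; apply: (lw_scale a IH).
- by move=> f g _ IH _ IH'; apply: LW_comp.
Qed.

Lemma LW_Good f : LW f -> Good f.
Proof.
elim => {f}.
- by move=> y; apply: (Good_cons y Good_id).
- by move=> y f _ IH; apply: Good_cons.
- exact: Good_0.
- by move=> f g _ IH _ IH'; apply: Good_add.
- by move=> a f _ IH; apply: Good_scale.
- by move=> f g _ IH E; apply: (Good_ext IH).
Qed.

Lemma build I : idl I -> dense I -> forall m w, w <> 0 ->
  exists x, AQ br x /\ (forall z, L z -> L (x z)) /\ x w <> 0 /\
    (forall v, Phi I m.+1 v -> L (x v)).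
Proof.
move=> HI dI; elim => [|m IH] w Hw.
- have [a [Ia Ha]] := dI w Hw.
  exists (Lop br a); split; first by apply: ga_L.
  split; first by move=> z Lz; apply: HLbr => //; exact: (idlL HI Ia).
  by split => // v Hv; exact: (Hv a Ia).
- have [a [Ia Ha]] := dI w Hw.
  have [x [Gx [Lx [Hxw Hxv]]]] := IH _ Ha.
  exists (fun u => x (Lop br a u)); split; first by apply: ga_comp => //; apply: ga_L.
  split; first by move=> z Lz; apply: Lx; apply: HLbr => //; exact: (idlL HI Ia).
  by split => // v Hv; apply: Hxv; exact: (Hv a Ia).
Qed.

Lemma main_result : left_quotient_alg (AQ br) (A0 br L).
Proof.
move=> p q Hp Hq' Hp0.
have [u Hu] : exists u, p u <> 0.
  apply: NNPP => H; apply: Hp0; apply: functional_extensionality => u.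
  by apply: NNPP => H'; apply: H; exists u.
have [Id [n [HId [dId Hgq]]]] := LW_Good (AQ_LW Hq').
have [x [Gx [Lx [Hxw Hxv]]]] := build HId dId n Hu.
exists x; split; first by split.
split.
  by move=> Hx0; apply: Hxw; have := congr1 (fun f => f u) Hx0.
split; first by apply: ga_comp.
move=> l Ll; apply: Hxv; apply: (Phi_ext (idlL HId) (leqnSn n)); exact: Hgq.
Qed.

End Main.

Theorem theorem5p11 (F : fieldType) (Q : lmodType F) (br : Q -> Q -> Q)
    (L : Q -> Prop) :
  symmetric_Leibniz br -> subalgebra br L -> semiprime br L ->
  quotient_alg br L ->
  left_quotient_alg (AQ br) (A0 br L).
Proof.
move=> [[Hb1 Hb2] [HR HJ]] [[HL0 HLlin] HLbr] Hsp Hq.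
by eapply main_result; eassumption.
Qed.
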